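(* Let $\mathsf G$ be a finite group, $\mathsf M\leqslant \mathsf G$, $\mathsf T\leqslant N_{\mathsf G}(\mathsf M)$ an abelian subgroup and $\mathsf r\in\mathsf T$. Assume that (q) $\mathsf M$ is quasi-simple; (n) $\mathsf r\notin \operatorname{Cent}_{\mathsf G}(\mathsf M)$; and (w) the set $(\mathcal O_{\mathsf r}^{\mathsf G}\cap \mathsf T)\setminus\big((\mathcal O_{\mathsf r}^{\mathsf M}\cap\mathsf T)\cup \operatorname{Cent}_{\mathsf G}(\mathsf M)\big)$ is nonempty. Then the conjugacy class $\mathcal O_{\mathsf r}^{\mathsf G}$ is of type C.
   Context: For a subgroup $H\leqslant G$ and $g\in G$, $\mathcal O_g^H=\{hgh^{-1}:h\in H\}$ is the orbit of $g$ under conjugation by $H$. A finite group is quasi-simple if it is perfect and $H/Z(H)$ is simple (hence non-abelian). A conjugacy class $\mathcal O$ of a finite group $G$ is of type C if there are $H\leqslant G$ and $r,s\in H\cap\mathcal O$ such that $rs\neq sr$, $H=\langle \mathcal O_r^H,\mathcal O_s^H\rangle$, $\mathcal O_r^H\neq\mathcal O_s^H$, and either $\min\{|\mathcal O_r^H|,|\mathcal O_s^H|\}>2$ or $\max\{|\mathcal O_r^H|,|\mathcal O_s^H|\}>4$. *)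

(* Defs.v *)
From mathcomp Require Import all_boot all_fingroup all_solvable.
Set Implicit Arguments. Unset Strict Implicit. Unset Printing Implicit Defensive.
Import GroupScope.
Local Open Scope group_scope.

(* O_g^H = {h g h^-1 : h in H} is the conjugacy class  g ^: H  (for H a group,
   {h g h^-1} and {h^-1 g h} range over the same set). *)

(* quasi-simple: perfect and M / Z(M) simple (mathcomp's [simple] includes
   nontriviality, hence non-abelian since M is perfect). *)
Definition quasisimple (gT : finGroupType) (M : {group gT}) : bool :=
  ([~: M, M] == M) && simple (M / 'Z(M)).

Definition typeC (gT : finGroupType) (G : {group gT}) (O : {set gT}) : Prop :=
  exists (H : {group gT}) (r s : gT),
    [/\ H \subset G, r \in H :&: O, s \in H :&: O & r * s != s * r] /\
    [/\ H :=: <<(r ^: H) :|: (s ^: H)>>, r ^: H != s ^: H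
      & (2 < minn #|r ^: H| #|s ^: H|) || (4 < maxn #|r ^: H| #|s ^: H|)].

(* Main.v *)
Require Import Defs.
From mathcomp Require Import all_boot all_fingroup all_solvable.
Local Open Scope group_scope.

Lemma qs_normal {gT : finGroupType} {M N : {group gT}} :
  quasisimple M -> N <| M -> N \subset 'Z(M) \/ M \subset N.
Proof.
move=> /andP[/eqP dM /simpleP[_ simM]] nNM.
have [sNM nNM'] := andP nNM.
have nZM : M \subset 'N('Z(M)) := normal_norm (center_normal M).
have nZN : N \subset 'N('Z(M)) := subset_trans sNM nZM.
have [N1 | NM] := simM _ (quotient_normal 'Z(M) nNM).
  by left; rewrite -(quotient_sub1 nZN) N1.
right.
have sMNZ : M \subset N <*> 'Z(M).
  rewrite -(quotientSGK nZM) ?joing_subr //.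
  by rewrite quotientYidr // NM.
rewrite -dM -derg1; apply: der1_min => //.
apply: abelianS (quotientS N sMNZ) _.
rewrite quotientYidl; last by apply: subset_trans (center_sub M) nNM'.
exact: quotient_abelian (center_abelian M).
Qed.

Lemma qs_gen {gT : finGroupType} {M : {group gT}} {y : gT} :
  quasisimple M -> y \in 'N(M) -> M \subset <<y ^: M>> \/ y \in 'C(M).
Proof.
move=> qM nMy.
have nKM : M \subset 'N(<<y ^: M>> :&: M).
  by rewrite normsI ?normG // norms_gen // class_norm.
have nK : (<<y ^: M>> :&: M)%G <| M by rewrite /normal subsetIr.
have [sKZ | sMK] := qs_normal qM nK; last first.
  by left; apply: subset_trans sMK (subsetIl _ _).
right.
have sC : [~: <[y]>, M] \subset 'Z(M).
  apply: subset_trans sKZ; rewrite subsetI; apply/andP; split.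
    apply: subset_trans (commSg _ (_ : <[y]> \subset <<y ^: M>>)) _; first by rewrite cycle_subG; apply: mem_gen; apply: class_refl.
    by rewrite commg_subl norms_gen // class_norm.
  by rewrite commg_subr cycle_subG.
have cZ : 'Z(M) \subset 'C(M) by apply: subsetIr.
have h1 : [~: M, <[y]>, M] :=: 1.
  by apply/commG1P; rewrite commGC; apply: subset_trans sC cZ.
have h2 : [~: <[y]>, M, M] :=: 1.
  by apply/commG1P; apply: subset_trans sC cZ.
have := three_subgroup h1 h2.
case/andP: qM => /eqP dM _; rewrite dM => /commG1P.
by rewrite centsC cycle_subG.
Qed.

Lemma qs_class_gt2 {gT : finGroupType} {M : {group gT}} {y : gT} :
  quasisimple M -> y \in 'N(M) -> y \notin 'C(M) -> 2 < #|y ^: M|.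
Proof.
move=> qM nMy nCy.
case/andP: (qM) => /eqP dM _.
rewrite -index_cent1.
case: ltnP => // le2; exfalso; move/negP: nCy; apply.
rewrite -sub_cent1.
have sCM : 'C_M[y] \subset M := subsetIl _ _.
suffices : M \subset 'C_M[y] by move/subset_trans; apply; apply: subsetIr.
have gt0 := indexg_gt0 M 'C_M[y].
case e: #|M : 'C_M[y]| gt0 le2 => [|[|[|n]]] // _ _.
  by rewrite -indexg_eq1 e.
have nCM := index2_normal sCM e.
rewrite -{1}dM -derg1; apply: der1_min; first exact: normal_norm nCM.
apply: cyclic_abelian; apply: prime_cyclic.
by rewrite card_quotient ?e // normal_norm.
Qed.

Lemma normJ_class {gT : finGroupType} {M : {group gT}} {y x : gT} :
  x \in 'N(M) -> commute y x -> x \in 'N(y ^: M).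
Proof.
move=> nMx cyx.
have sub : (y ^: M) :^ x \subset y ^: M.
  apply/subsetP=> z; rewrite mem_conjg => /imsetP[m Mm e].
  rewrite -(conjgKV x z) e.
  have fy : y ^ x = y by rewrite conjgE ?mulgA -?mulgA cyx mulKg.
  rewrite -conjgM conjgC conjgM fy.
  by apply: memJ_class; rewrite memJ_norm.
by apply/normP/eqP; rewrite eqEcard sub cardJg leqnn.
Qed.

Theorem mainTheorem2 (gT : finGroupType) (G M T : {group gT}) (r : gT) :
  M \subset G ->
  T \subset 'N_G(M) ->
  abelian T ->
  r \in T ->
  quasisimple M ->
  r \notin 'C_G(M) ->
  ((r ^: G :&: T) :\: ((r ^: M :&: T) :|: 'C_G(M))) != set0 ->
  typeC G (r ^: G).
Proof.
move=> sMG sTN abT rT qM nrC /set0Pn[s].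
case/setDP=> /setIP[srG sT] nU.
have sTG : T \subset G := subset_trans sTN (subsetIl _ _).
have nTM : T \subset 'N(M) := subset_trans sTN (subsetIr _ _).
have rG : r \in G := subsetP sTG r rT.
have sG : s \in G := subsetP sTG s sT.
have rN : r \in 'N(M) := subsetP nTM r rT.
have sN : s \in 'N(M) := subsetP nTM s sT.
have rnC : r \notin 'C(M) by apply: contra nrC => h; rewrite in_setI rG h.
have snC : s \notin 'C(M).
  by apply: contra nU => h; apply/setUP; right; rewrite in_setI sG h.
have nsM : s \notin r ^: M.
  by apply: contra nU => h; apply/setUP; left; rewrite in_setI h sT.
have crs : commute r s := centsP abT r rT s sT.
have sMr : M \subset <<r ^: M>>.
  by case: (qs_gen qM rN) => // h; rewrite h in rnC.
pose H := <<r ^: M :|: s ^: M>>%G.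
have sMH : M \subset H := subset_trans sMr (genS (subsetUl _ _)).
pose L := ('N(r ^: M) :&: 'N(s ^: M))%G.
have sML : M \subset L by rewrite subsetI !class_norm.
have nLM : M \subset 'N(L) := subset_trans sML (normG _).
have rL : r \in L.
  by rewrite in_setI (normJ_class rN (commute_refl r)) (normJ_class rN (commute_sym crs)).
have sL : s \in L.
  by rewrite in_setI (normJ_class sN crs) (normJ_class sN (commute_refl s)).
have sHL : H \subset L.
  by rewrite gen_subG subUset (class_sub_norm r nLM) (class_sub_norm s nLM) rL sL.
have clH : forall y, H \subset 'N(y ^: M) -> y ^: H = y ^: M.
  move=> y nH; apply/eqP; rewrite eqEsubset (classS y sMH) andbT.
  by rewrite (class_sub_norm y nH) class_refl.
have crH : r ^: H = r ^: M := clH r (subset_trans sHL (subsetIl _ _)).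
have csH : s ^: H = s ^: M := clH s (subset_trans sHL (subsetIr _ _)).
have [x xr ncx] : exists2 x, x \in r ^: M & x \notin 'C[s].
  apply/subsetPn; apply: contra snC => h.
  by rewrite -sub_cent1; apply: subset_trans sMr _; rewrite gen_subG.
exists H, x, s; split; split.
- by rewrite gen_subG subUset !class_subG.
- by rewrite in_setI mem_gen ?inE ?xr // (subsetP (classS r sMG)).
- by rewrite in_setI srG mem_gen // inE class_refl orbT.
- by apply: contra ncx => /eqP h; apply/cent1P.
- have -> : x ^: H = r ^: H by apply/class_eqP; rewrite crH.
  by rewrite crH csH.
- have -> : x ^: H = r ^: H by apply/class_eqP; rewrite crH.
  by rewrite crH csH; apply: contra nsM => /eqP ->; apply: class_refl.
- have -> : x ^: H = r ^: H by apply/class_eqP; rewrite crH.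
  by rewrite crH csH; apply/orP; left; rewrite leq_min (qs_class_gt2 qM rN rnC) (qs_class_gt2 qM sN snC).
Qed.
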